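(* For each $k\ge1$ there is a cone complex $\mathcal{S}_k$ in $M_{\mathbb{R}}$ whose support $\bigcup_{\sigma\in\mathcal{S}_k}\sigma$ equals \[\mathcal{W}_k=\{\theta\in M_{\mathbb{R}}:\text{there exists a nonzero }\theta\text{-semistable object }E\in\mathcal{A}\text{ of total dimension}\le k\}.\] In particular $\mathcal{W}_k$ is closed.
   Context: $Q$ is a quiver (finite vertex set $V(Q)$, finite arrow set), $\mathbb{C}Q$ its path algebra, $I\subset\mathbb{C}Q$ a two-sided ideal spanned by linear combinations of paths of length $\ge2$, and $\mathcal{A}=\mathrm{rep}(Q,I)$ the abelian category of finite-dimensional left $\mathbb{C}Q/I$-modules. $N=\mathbb{Z}^{V(Q)}$ with basis $(e_i)$; each $E\in\mathcal{A}$ has a dimension vector $d(E)\in N$; $M=\mathrm{Hom}(N,\mathbb{Z})$, $M_{\mathbb{R}}=M\otimes\mathbb{R}$, and for $\theta\in M_{\mathbb{R}}$ write $\theta(E)=\theta(d(E))$. The total dimension of $E$ is $\dim_{\mathbb{C}}E$. An object $E$ is $\theta$-semistable if $\theta(E)=0$ and every subobject $A\subset E$ satisfies $\theta(A)\le0$. A cone is a convex rational polyhedral cone $\{\sum\lambda_im_i:\lambda_i\ge0\}$ ($m_i\in M$); a face of $\sigma$ is $\sigma\cap n^\perp$ for $n\in N$ with $\theta(n)\ge0$ on $\sigma$; a cone complex is a finite collection of cones closed under taking faces and such that any two intersect in a face of each. *)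

(* Defs.v *)
From HB Require Import structures.
From mathcomp Require Import all_boot all_order all_algebra.
From mathcomp Require Import all_classical all_reals all_analysis.
From mathcomp Require Import Rstruct Rstruct_topology.
From mathcomp Require Import complex.
Import Order.TTheory GRing.Theory Num.Theory.

Set Implicit Arguments.
Unset Strict Implicit.
Unset Printing Implicit Defensive.

Local Open Scope ring_scope.
Local Open Scope classical_set_scope.

Notation RR := Rdefinitions.R.
Definition CC : fieldType := complex RR.

(* A quiver is given by finite types V (vertices), A (arrows) and the  *)
(* source / target maps src tgt : A -> V.  A path of positive length   *)
(* is a sequence of arrows [a1; ...; am] (traversed a1 first) with     *)
(* tgt a_j = src a_{j+1}.                                              *)
Section Quiver.
Variables (V A : finType) (src tgt : A -> V).

Definition composable (p : seq A) : bool :=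
  if p is a :: q then path (fun a b => tgt a == src b) a q else true.

(* An element of the path algebra C Q, written as a formal linear
   combination  \sum c_p p  of paths. *)
Definition pathalg_elt := seq (CC * seq A).

Definition len2_comb (r : pathalg_elt) : bool :=
  all (fun cp => (2 <= size cp.2)%N && composable cp.2) r.

(* Finite-dimensional left C Q-modules on C^n (row vectors, acting on  *)
(* the right):  idempotents e_i (i in V) and arrow operators x_a.      *)
Record qmod (n : nat) := QMod { qe : V -> 'M[CC]_n ; qx : A -> 'M[CC]_n }.

Definition is_qmod n (E : qmod n) : Prop :=
  [/\ (forall i, qe E i *m qe E i = qe E i),
      (forall i j, i != j -> qe E i *m qe E j = 0),
      \sum_i qe E i = 1%:M
    & (forall a, qx E a = qe E (src a) *m qx E a *m qe E (tgt a))].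

Definition path_act n (E : qmod n) (p : seq A) : 'M[CC]_n :=
  foldr (fun a M => qx E a *m M) 1%:M p.

Definition elt_act n (E : qmod n) (r : pathalg_elt) : 'M[CC]_n :=
  \sum_(cp <- r) cp.1 *: path_act E cp.2.

(* E is a module over C Q / I : every element of I acts by zero. *)
Definition annihilated (I : pathalg_elt -> Prop) n (E : qmod n) : Prop :=
  forall r, I r -> elt_act E r = 0.

Definition submod n (E : qmod n) (U : 'M[CC]_n) : Prop :=
  (forall i, stablemx U (qe E i)) /\ (forall a, stablemx U (qx E a)).

Definition dimvec n (E : qmod n) (U : 'M[CC]_n) : V -> nat :=
  fun i => \rank (U *m qe E i).

Definition pairing (theta : V -> RR) (d : V -> nat) : RR :=
  \sum_i theta i * (d i)%:R.

Definition semistable (theta : V -> RR) n (E : qmod n) : Prop :=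
  pairing theta (dimvec E 1%:M) = 0 /\
  forall U, submod E U -> pairing theta (dimvec E U) <= 0.

Definition Wset (I : pathalg_elt -> Prop) (k : nat) : set (V -> RR) :=
  [set theta | exists n : nat, (0 < n <= k)%N /\
     exists E : qmod n, [/\ is_qmod E, annihilated I E & semistable theta E]].

Definition zpairing (theta : V -> RR) (n : {ffun V -> int}) : RR :=
  \sum_i theta i * (n i)%:~R.

Definition cone (gens : seq {ffun V -> int}) : set (V -> RR) :=
  [set theta | exists lam : 'I_(size gens) -> RR,
     (forall j, 0 <= lam j) /\
     theta = fun i => \sum_(j < size gens) lam j * ((gens`_j)%R i)%:~R].

Definition is_face (tau sigma : set (V -> RR)) : Prop :=
  exists n : {ffun V -> int},
    (forall theta, sigma theta -> 0 <= zpairing theta n) /\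
    tau = sigma `&` [set theta | zpairing theta n = 0].

Definition cone_complex (S : seq (seq {ffun V -> int})) : Prop :=
  (forall s, s \in S -> forall tau, is_face tau (cone s) ->
      exists2 s', s' \in S & cone s' = tau) /\
  (forall s t, s \in S -> t \in S ->
      is_face (cone s `&` cone t) (cone s) /\
      is_face (cone s `&` cone t) (cone t)).

Definition cc_support (S : seq (seq {ffun V -> int})) : set (V -> RR) :=
  [set theta | exists2 s, s \in S & cone s theta].

End Quiver.

(* Main.v *)
Require Import Defs.
From HB Require Import structures.
From mathcomp Require Import all_boot all_order all_algebra.
From mathcomp Require Import all_classical all_reals all_analysis.
From mathcomp Require Import Rstruct Rstruct_topology.
From mathcomp Require Import ring lra.
Import Order.TTheory GRing.Theory Num.Theory.
Import numFieldNormedType.Exports.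
Local Open Scope classical_set_scope.
Set Implicit Arguments.
Unset Strict Implicit.
Unset Printing Implicit Defensive.
Section ConeLib.
Local Open Scope ring_scope.
Variable V : finType.
Notation ivec := {ffun V -> int}.
Notation rvec := (V -> RR).

Definition vec (g : ivec) : rvec := fun i => (g i)%:~R.
Definition vadd (x y : rvec) : rvec := fun i => x i + y i.
Definition vscal (c : RR) (x : rvec) : rvec := fun i => c * x i.
Definition vzero : rvec := fun _ => 0.
Definition zpair (a g : ivec) : int := \sum_i a i * g i.

Fixpoint icone (G : seq ivec) (x : rvec) : Prop :=
  match G with
  | [::] => x = vzero
  | g :: G' => exists c, 0 <= c /\ exists y, icone G' y /\ x = vadd (vscal c (vec g)) y
  end.

Lemma coneE G : cone G = icone G.
Proof.
apply/funext => x; apply/propext; split.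
  elim: G x => [|g G IH] x [lam [lam0 ->]] /=.
    by apply/funext => i; rewrite big_ord0.
  exists (lam ord0); split => //.
  exists (fun i => \sum_(j < size G) lam (lift ord0 j) * ((G`_j) i)%:~R).
  split; first by apply: IH; exists (fun j => lam (lift ord0 j)).
  by apply/funext => i; rewrite /vadd /vscal /vec big_ord_recl.
elim: G x => [|g G IH] x /=.
  by move=> ->; exists (fun j => 0); split => // ; apply/funext=> i; rewrite big_ord0.
move=> [c [c0 [y [/IH [lam [lam0 ->]] ->]]]].
exists (fun j => if unlift ord0 j is Some j' then lam j' else c); split.
  by move=> j; case: (unlift ord0 j).
apply/funext => i; rewrite /vadd /vscal /vec big_ord_recl unlift_none /=.
congr (_ + _); apply: eq_bigr => j _; by rewrite liftK.
Qed.

Lemma icone0 G : icone G vzero.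
Proof.
elim: G => [|g G IH] //=; exists 0; split => //; exists vzero; split => //.
by apply/funext => i; rewrite /vadd /vscal /vzero mul0r addr0.
Qed.

Lemma icone_add G x y : icone G x -> icone G y -> icone G (vadd x y).
Proof.
elim: G x y => [|g G IH] x y /=.
  by move=> -> ->; apply/funext => i; rewrite /vadd /vzero addr0.
move=> [c [c0 [x' [hx' ->]]]] [d [d0 [y' [hy' ->]]]].
exists (c + d); split; first by rewrite addr_ge0.
exists (vadd x' y'); split; first exact: IH.
by apply/funext => i; rewrite /vadd /vscal; ring.
Qed.

Lemma icone_scal G c x : 0 <= c -> icone G x -> icone G (vscal c x).
Proof.
elim: G x => [|g G IH] x c0 /=.
  by move=> ->; apply/funext => i; rewrite /vscal /vzero mulr0.
move=> [d [d0 [x' [hx' ->]]]].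
exists (c * d); split; first by rewrite mulr_ge0.
exists (vscal c x'); split; first exact: IH.
by apply/funext => i; rewrite /vadd /vscal; ring.
Qed.

Lemma icone_gen G g : g \in G -> icone G (vec g).
Proof.
elim: G => [|h G IH] //=; rewrite inE => /orP [/eqP ->|/IH hg].
  exists 1; split => //; exists vzero; split; first exact: icone0.
  by apply/funext => i; rewrite /vadd /vscal /vzero mul1r addr0.
exists 0; split => //; exists (vec g); split => //.
by apply/funext => i; rewrite /vadd /vscal mul0r add0r.
Qed.

Definition ccone (K : set rvec) := [/\ K vzero,
  (forall x y, K x -> K y -> K (vadd x y)) &
  (forall c x, 0 <= c -> K x -> K (vscal c x))].

Lemma icone_min G (K : set rvec) : ccone K -> (forall g, g \in G -> K (vec g)) ->
  forall x, icone G x -> K x.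
Proof.
move=> [K0 Kadd Kscal]; elim: G => [|g G IH] hG x /=; first by move=> ->.
move=> [c [c0 [y [hy ->]]]]; apply: Kadd; first by apply: Kscal => //; apply: hG; rewrite inE eqxx.
by apply: IH => // h hh; apply: hG; rewrite inE hh orbT.
Qed.

Lemma ccone_icone G : ccone (icone G).
Proof. by split; [exact: icone0| exact: icone_add| move=> c x c0; exact: icone_scal]. Qed.

Lemma icone_sub G G' : {subset G <= G'} -> forall x, icone G x -> icone G' x.
Proof. by move=> sGG'; apply: icone_min; [exact: ccone_icone| move=> g /sGG'; exact: icone_gen]. Qed.

Lemma zp_add x y n : zpairing (vadd x y) n = zpairing x n + zpairing y n.
Proof. by rewrite /zpairing -big_split; apply: eq_bigr => i _; rewrite /vadd mulrDl. Qed.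
Lemma zp_scal c x n : zpairing (vscal c x) n = c * zpairing x n.
Proof. by rewrite /zpairing mulr_sumr; apply: eq_bigr => i _; rewrite /vscal mulrA. Qed.
Lemma zp_zero n : zpairing vzero n = 0.
Proof. by rewrite /zpairing big1 // => i _; rewrite /vzero mul0r. Qed.
Lemma zp_vec g n : zpairing (vec g) n = (zpair n g)%:~R.
Proof. by rewrite /zpairing /zpair rmorph_sum; apply: eq_bigr => i _; rewrite /vec rmorphM /= mulrC. Qed.

Lemma ccone_half n : ccone [set x | 0 <= zpairing x n].
Proof.
split => [|x y /= hx hy|c x c0 /= hx]; first by rewrite /= zp_zero.
  by rewrite zp_add addr_ge0.
by rewrite zp_scal mulr_ge0.
Qed.
Lemma ccone_nhalf n : ccone [set x | zpairing x n <= 0].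
Proof.
split => [|x y /= hx hy|c x c0 /= hx]; first by rewrite /= zp_zero.
  by rewrite zp_add; lra.
by rewrite zp_scal; nra.
Qed.
Lemma ccone_hyp n : ccone [set x | zpairing x n = 0].
Proof.
split => [|x y /= hx hy|c x c0 /= hx]; first by rewrite /= zp_zero.
  by rewrite zp_add hx hy addr0.
by rewrite zp_scal hx mulr0.
Qed.
Lemma ccone_I K L : ccone K -> ccone L -> ccone (K `&` L).
Proof.
move=> [K0 Ka Ks] [L0 La Ls]; split => //.
  by move=> x y [? ?] [? ?]; split; [apply: Ka|apply: La].
by move=> c x c0 [? ?]; split; [apply: Ks|apply: Ls].
Qed.

Lemma icone_ge0 G n : (forall g, g \in G -> 0 <= zpair n g) ->
  forall x, icone G x -> 0 <= zpairing x n.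
Proof.
move=> h x hx; have := icone_min (ccone_half n) _ hx; apply.
by move=> g /h /=; rewrite zp_vec ler0z.
Qed.

Lemma icone_face G n : (forall g, g \in G -> 0 <= zpair n g) ->
  icone G `&` [set x | zpairing x n = 0] = icone [seq g <- G | zpair n g == 0].
Proof.
move=> hG; apply/seteqP; split => x.
  move=> [hx hn]; elim: G hG x hx hn => [|g G IH] hG x /=; first by move=> ->.
  move=> [c [c0 [y [hy ->]]]].
  have hG' : forall h, h \in G -> 0 <= zpair n h by move=> h hh; apply: hG; rewrite inE hh orbT.
  have hy0 := icone_ge0 hG' hy.
  have hg0 : 0 <= zpair n g by apply: hG; rewrite inE eqxx.
  rewrite zp_add zp_scal zp_vec => h0.
  have ha : c * (zpair n g)%:~R = 0.
    apply/eqP; rewrite eq_le mulr_ge0 ?ler0z // andbT.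
    by rewrite -h0 lerDl.
  have hb : zpairing y n = 0 by move: h0; rewrite ha add0r.
  have := IH hG' y hy hb.
  case: ifP => [/eqP hz|hz] hy'.
    by exists c; split => //; exists y.
  move/eqP: ha; rewrite mulf_eq0 intr_eq0 hz orbF => /eqP c0'.
  have -> : vadd (vscal c (vec g)) y = y.
    by apply/funext => i; rewrite /vadd /vscal c0' mul0r add0r.
  by [].
move=> hx; split.
  by apply: icone_sub hx => g; rewrite mem_filter => /andP [].
have := icone_min (ccone_hyp n) _ hx; apply.
by move=> g; rewrite mem_filter => /andP [/eqP h _]; rewrite /= zp_vec h.
Qed.


Lemma le_sum_seq (T : eqType) (s : seq T) (F : T -> int) t :
  (forall u, 0 <= F u) -> t \in s -> F t <= \sum_(u <- s) F u.
Proof.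
move=> F0; elim: s => [|u s IH] //; rewrite inE big_cons => /orP [/eqP ->|/IH h].
  by rewrite lerDl sumr_ge0.
by apply: le_trans h _; rewrite lerDr.
Qed.

Lemma zpair_lin (N : int) (n m g : ivec) :
  zpair [ffun i => N * n i + m i] g = N * zpair n g + zpair m g.
Proof.
rewrite /zpair mulr_sumr -big_split; apply: eq_bigr => i _; by rewrite ffunE mulrDl mulrA.
Qed.

Lemma face_trans G n m : (forall g, g \in G -> 0 <= zpair n g) ->
  (forall x, icone G x -> zpairing x n = 0 -> 0 <= zpairing x m) ->
  exists n', (forall g, g \in G -> 0 <= zpair n' g) /\
    icone G `&` [set x | zpairing x n' = 0] =
    (icone G `&` [set x | zpairing x n = 0]) `&` [set x | zpairing x m = 0].
Proof.
move=> hn hm.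
pose N : int := 1 + \sum_(u <- G) `|zpair m u|.
have hm' : forall g, g \in G -> zpair n g = 0 -> 0 <= zpair m g.
  move=> g hg h0; have := hm (vec g) (icone_gen hg); rewrite !zp_vec h0 /=.
  by rewrite ler0z; apply.
have key : forall g, g \in G -> ((zpair [ffun i => N * n i + m i] g == 0) =
     (zpair n g == 0) && (zpair m g == 0)) /\ 0 <= zpair [ffun i => N * n i + m i] g.
  move=> g hg; rewrite zpair_lin.
  have := hn g hg; rewrite le_eqVlt => /orP [/eqP h0|hpos].
    by rewrite -h0 mulr0 add0r eqxx /=; split => //; apply: hm'.
  have hle : `|zpair m g| <= \sum_(u <- G) `|zpair m u|.
    exact: (@le_sum_seq _ G (fun u => `|zpair m u|) g (fun u => normr_ge0 _) hg).
  have h1 : 1 <= zpair n g by [].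
  have hN : N <= N * zpair n g by rewrite ler_peMr // /N; apply: addr_ge0 => //; apply: sumr_ge0.
  have hb : 0 < N * zpair n g + zpair m g.
    have := ler_norm (- zpair m g); rewrite normrN /N in hle hN *; lra.
  by rewrite (gt_eqF hb) (gt_eqF hpos) /=; split => //; apply: ltW.
exists [ffun i => N * n i + m i]; split; first by move=> g /key [].
rewrite (icone_face (fun g hg => proj2 (key g hg))) (icone_face hn).
rewrite (@icone_face _ m); last first.
  by move=> g; rewrite mem_filter => /andP [/eqP h0 hg]; apply: hm'.
rewrite -filter_predI; congr icone; apply: eq_in_filter => g /key [-> _].
by rewrite andbC.
Qed.


Definition comb (a g h : ivec) : ivec := [ffun i => zpair a g * h i - zpair a h * g i].

Lemma vec_comb a g h : vec (comb a g h) =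
  vadd (vscal (zpair a g)%:~R (vec h)) (vscal (- (zpair a h)%:~R) (vec g)).
Proof.
apply/funext => i; rewrite /vec /vadd /vscal ffunE rmorphB /= !rmorphM /=; ring.
Qed.

Lemma zpair_comb a g h : zpair a (comb a g h) = 0.
Proof.
set pg := zpair a g; set ph := zpair a h.
transitivity (pg * ph - ph * pg); last by rewrite mulrC subrr.
rewrite /ph /pg /zpair !mulr_sumr -sumrB; apply: eq_bigr => i _; rewrite ffunE.
rewrite -/(zpair a g) -/(zpair a h); ring.
Qed.

Section DD.
Variables (a : ivec) (G : seq ivec).
Definition Gz := [seq g <- G | zpair a g == 0].
Definition Gp := [seq g <- G | 0 < zpair a g].
Definition Gn := [seq g <- G | zpair a g < 0].
Definition ddG := Gz ++ Gp ++ [seq comb a g h | g <- Gp, h <- Gn].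

Lemma split3 x : icone G x -> exists xz xp xn,
  [/\ icone Gz xz, icone Gp xp, icone Gn xn & x = vadd xz (vadd xp xn)].
Proof.
rewrite /Gz /Gp /Gn; elim: G x => [|g G' IH] x /=.
  by move=> ->; exists vzero, vzero, vzero; split => //; apply/funext => i; rewrite /vadd /vzero !addr0.
move=> [c [c0 [y [/IH [xz [xp [xn [hz hp hn ->]]]] ->]]]].
case: (ltrgtP (zpair a g) 0) => hg /=.
- exists xz, xp, (vadd (vscal c (vec g)) xn); split => //=; first by exists c; split => //; exists xn.
  by apply/funext => i; rewrite /vadd /vscal; ring.
- exists xz, (vadd (vscal c (vec g)) xp), xn; split => //=; first by exists c; split => //; exists xp.
  by apply/funext => i; rewrite /vadd /vscal; ring.
- exists (vadd (vscal c (vec g)) xz), xp, xn; split => //=; first by exists c; split => //; exists xz.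
  by apply/funext => i; rewrite /vadd /vscal; ring.
Qed.

Lemma ddG_sub : icone ddG `<=` icone G `&` [set x | 0 <= zpairing x a].
Proof.
move=> x hx; have := icone_min (ccone_I (ccone_icone G) (ccone_half a)) _ hx; apply.
move=> g; rewrite !mem_cat => /or3P [|hg|].
- rewrite mem_filter => /andP [/eqP h0 hg]; split; first exact: icone_gen.
  by rewrite /= zp_vec h0.
- move: hg; rewrite mem_filter => /andP [h0 hg]; split; first exact: icone_gen.
  by rewrite /= zp_vec ler0z ltW.
- move=> /allpairsP [[g1 h1] /= [hg1 hh1 ->]]; split; last by rewrite /= zp_vec zpair_comb.
  move: hg1 hh1; rewrite !mem_filter => /andP [p1 g1G] /andP [n1 h1G].
  rewrite vec_comb; apply: icone_add; apply: icone_scal; try exact: icone_gen.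
    by rewrite ler0z ltW.
  by rewrite oppr_ge0 lerz0 ltW.
Qed.

Lemma mem_ddG_z g : g \in Gz -> g \in ddG.
Proof. by rewrite mem_cat => ->. Qed.
Lemma mem_ddG_p g : g \in Gp -> g \in ddG.
Proof. by rewrite !mem_cat => ->; rewrite orbT. Qed.
Lemma mem_ddG_c g h : g \in Gp -> h \in Gn -> comb a g h \in ddG.
Proof.
by move=> hg hh; rewrite !mem_cat; apply/orP; right; apply/orP; right; apply: allpairs_f.
Qed.

Lemma comb_lin h : h \in Gn -> forall xp, icone Gp xp ->
  icone ddG (vadd (vscal (zpairing xp a) (vec h)) (vscal (- (zpair a h)%:~R) xp)).
Proof.
move=> hh xp hxp.
pose w (y : rvec) := vadd (vscal (zpairing y a) (vec h)) (vscal (- (zpair a h)%:~R) y).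
have hK : ccone [set y | icone ddG (w y)].
  split => /=.
  - have -> : w vzero = vzero by apply/funext => i; rewrite /w /vadd /vscal zp_zero /vzero; ring.
    exact: icone0.
  - move=> y z hy hz; have -> : w (vadd y z) = vadd (w y) (w z).
      by apply/funext => i; rewrite /w /vadd /vscal zp_add; ring.
    exact: icone_add.
  - move=> c y c0 hy; have -> : w (vscal c y) = vscal c (w y).
      by apply/funext => i; rewrite /w /vadd /vscal zp_scal; ring.
    exact: icone_scal.
have := icone_min hK _ hxp; apply => g hg /=.
have -> : w (vec g) = vec (comb a g h).
  by rewrite vec_comb /w zp_vec.
by apply: icone_gen; apply: mem_ddG_c.
Qed.

Lemma claim (L : seq ivec) : {subset L <= Gn} -> forall xp xn,
  icone Gp xp -> icone L xn -> 0 <= zpairing (vadd xp xn) a -> icone ddG (vadd xp xn).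
Proof.
have Pp : forall xp, icone Gp xp -> 0 <= zpairing xp a.
  move=> xp; apply: icone_ge0 => g; rewrite mem_filter => /andP [h _]; exact: ltW.
elim: L => [|h L IH] sL xp xn hxp /=.
  move=> -> _; have -> : vadd xp vzero = xp by apply/funext => i; rewrite /vadd /vzero addr0.
  by apply: icone_sub hxp => g; exact: mem_ddG_p.
move=> [c [c0 [y [hy ->]]]].
have sL' : {subset L <= Gn} by move=> u hu; apply: sL; rewrite inE hu orbT.
have hhn : h \in Gn by apply: sL; rewrite inE eqxx.
have Yle : zpairing y a <= 0.
  have := icone_min (ccone_nhalf a) _ hy; apply => g /sL'; rewrite mem_filter => /andP [hg _].
  by rewrite /= zp_vec lerz0 ltW.
have qlt : (zpair a h)%:~R < 0 :> RR.
  by move: hhn; rewrite mem_filter ltrz0 => /andP [].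
set P := zpairing xp a; set q := (zpair a h)%:~R : RR; set Y := zpairing y a.
rewrite zp_add zp_add zp_scal zp_vec -/P -/q -/Y => hsum.
have P0 : 0 <= P by exact: Pp.
have qlt' : q < 0 := qlt. have Yle' : Y <= 0 := Yle.
case: (eqVneq P 0) => [P0'|Pn0].
  have c0' : c = 0.
    have cq : c * q = 0 by nra.
    by move: cq => /eqP; rewrite mulf_eq0 (lt_eqF qlt) orbF => /eqP.
  have -> : vadd xp (vadd (vscal c (vec h)) y) = vadd xp y.
    by apply/funext => i; rewrite /vadd /vscal c0'; ring.
  by apply: IH => //; rewrite zp_add -/P -/Y; move: hsum; rewrite c0' mul0r add0r; lra.
have Ppos : 0 < P by rewrite lt_neqAle eq_sym Pn0.
pose z := vscal ((P + c * q) / P) xp.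
pose w := vscal (c / P) (vadd (vscal P (vec h)) (vscal (- q) xp)).
have hz : icone Gp z by apply: icone_scal => //; apply: divr_ge0 => //; lra.
have hw : icone ddG w by apply: icone_scal; [exact: divr_ge0| exact: comb_lin].
have hzy : icone ddG (vadd z y).
  apply: IH => //; rewrite zp_add zp_scal -/P -/Y divfK //; lra.
have -> : vadd xp (vadd (vscal c (vec h)) y) = vadd (vadd z y) w.
  apply/funext => i; rewrite /z /w /vadd /vscal; field; exact: Pn0.
exact: icone_add.
Qed.

Lemma ddG_eq : icone ddG = icone G `&` [set x | 0 <= zpairing x a].
Proof.
apply/seteqP; split; first exact: ddG_sub.
move=> x [hx hxa]; have [xz [xp [xn [hz hp hn ex]]]] := split3 hx.
have z0 : zpairing xz a = 0.
  have := icone_min (ccone_hyp a) _ hz; apply => g; rewrite mem_filter => /andP [/eqP h _].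
  by rewrite /= zp_vec h.
rewrite ex; apply: icone_add.
  by apply: icone_sub hz => g; exact: mem_ddG_z.
apply: (@claim Gn) => //.
by move: hxa; rewrite /= ex zp_add z0 add0r.
Qed.

End DD.


Definition Hset (A : seq ivec) : set rvec :=
  [set x | forall a, a \in A -> 0 <= zpairing x a].

Definition G0 : seq ivec := [seq [ffun j => (i == j)%:Z] | i <- enum V] ++
  [seq [ffun j => - (i == j)%:Z] | i <- enum V].

Lemma icone_G0 x : icone G0 x.
Proof.
have hs : forall s : seq V, icone G0 (fun j => \sum_(i <- s) x i * (i == j)%:R).
  elim => [|i s IH].
    have -> : (fun j => \sum_(i <- [::]) x i * (i == j)%:R) = vzero
      by apply/funext => j; rewrite big_nil.
    exact: icone0.
  have -> : (fun j => \sum_(i0 <- i :: s) x i0 * (i0 == j)%:R) =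
     vadd (fun j => x i * (i == j)%:R) (fun j => \sum_(i <- s) x i * (i == j)%:R).
    by apply/funext => j; rewrite big_cons.
  apply: icone_add => //.
  case: (lerP 0 (x i)) => hi.
    have -> : (fun j => x i * (i == j)%:R) = vscal (x i) (vec [ffun j => (i == j)%:Z]).
      by apply/funext => j; rewrite /vscal /vec ffunE; case: (i == j).
    apply: icone_scal => //; apply: icone_gen; rewrite mem_cat; apply/orP; left.
    by apply: map_f; rewrite mem_enum.
  have -> : (fun j => x i * (i == j)%:R) = vscal (- x i) (vec [ffun j => - (i == j)%:Z]).
    by apply/funext => j; rewrite /vscal /vec ffunE; case: (i == j) => /=; rewrite ?oppr0 ?mulr0 ?mulrNN.
  apply: icone_scal; first lra.
  apply: icone_gen; rewrite mem_cat; apply/orP; right.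
  by apply: map_f; rewrite mem_enum.
have -> : x = (fun j => \sum_(i <- enum V) x i * (i == j)%:R).
  apply/funext => j; rewrite (bigD1_seq j) ?mem_enum ?enum_uniq //= eqxx mulr1.
  rewrite big1 ?addr0 // => i hij; by rewrite (negbTE hij) mulr0.
exact: hs.
Qed.

Lemma HtoV A : exists G, icone G = Hset A.
Proof.
elim: A => [|a A [G hG]].
  exists G0; apply/seteqP; split => x _; last exact: icone_G0.
  by move=> a.
exists (ddG a G); rewrite ddG_eq hG; apply/seteqP; split => x.
  by move=> [hA ha] b; rewrite inE => /orP [/eqP ->|/hA].
move=> h; split; first by move=> b hb; apply: h; rewrite inE hb orbT.
by apply: h; rewrite inE eqxx.
Qed.

End ConeLib.
Lemma add_cont_real (R : realType) : continuous (fun z : R * R => (z.1 + z.2)%R).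
Proof. exact: add_continuous. Qed.

Section Main.
Local Open Scope ring_scope.
Variables (V A : finType) (src tgt : A -> V) (I : pathalg_elt A -> Prop) (k : nat).
Notation ivec := {ffun V -> int}.
Notation rvec := (V -> RR).
Notation Fk := {ffun V -> 'I_k.+1}.
Notation Sig := {ffun Fk -> option bool}.

Definition dvec (f : Fk) : ivec := [ffun i => (f i : nat)%:Z].
Definition sgc (o : option bool) (r : RR) : Prop :=
  match o with None => r = 0 | Some true => 0 <= r | Some false => r <= 0 end.
Definition cell (s : Sig) : set rvec := [set x | forall f, sgc (s f) (zpairing x (dvec f))].
Definition negv (d : ivec) : ivec := [ffun i => - d i].
Definition condl (o : option bool) (d : ivec) : seq ivec :=
  match o with None => [:: d; negv d] | Some true => [:: d] | Some false => [:: negv d] end.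
Definition cellA (s : Sig) := flatten [seq condl (s f) (dvec f) | f <- enum Fk].

Lemma zp_neg x d : zpairing x (negv d) = - zpairing x d.
Proof.
rewrite /zpairing -sumrN; apply: eq_bigr => i _; rewrite ffunE rmorphN /=; ring.
Qed.

Lemma cellE s : Hset (cellA s) = cell s.
Proof.
apply/seteqP; split => x /=.
  move=> h f.
  have ha : forall a, a \in condl (s f) (dvec f) -> 0 <= zpairing x a.
    by move=> a ha; apply: h; apply/flatten_mapP; exists f; rewrite ?mem_enum.
  case: (s f) ha => [[]|] /= ha.
  - by apply: ha; rewrite inE.
  - by have := ha (negv (dvec f)); rewrite zp_neg inE eqxx => /(_ isT); lra.
  - have := ha (negv (dvec f)); rewrite zp_neg !inE eqxx orbT => /(_ isT).
    have := ha (dvec f); rewrite inE eqxx => /(_ isT); lra.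
move=> h a /flatten_mapP [f _]; have := h f.
case: (s f) => [[]|] /=; rewrite ?inE => hf /=.
- by move/eqP ->.
- by move/eqP ->; rewrite zp_neg; lra.
- by move=> /orP [] /eqP ->; rewrite ?zp_neg; lra.
Qed.

Definition W := Wset src tgt I k.

Definition fd (d : V -> nat) : Fk := [ffun i => inord (d i)].

Lemma pairing_fd n (E : qmod V A n) (U : 'M[CC]_n) th : (n <= k)%N ->
  pairing th (dimvec E U) = zpairing th (dvec (fd (dimvec E U))).
Proof.
move=> nk; rewrite /pairing /zpairing; apply: eq_bigr => i _; rewrite !ffunE inordK //.
rewrite ltnS; apply: leq_trans nk; exact: rank_leq_col.
Qed.

Definition sgnv (th : rvec) : Sig :=
  [ffun f => if zpairing th (dvec f) == 0 then None else Some (0 < zpairing th (dvec f))].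

Lemma cell_sgnv th : cell (sgnv th) th.
Proof.
move=> f; rewrite ffunE; case: eqP => [//|/eqP hn] /=.
by case: (ltrP 0 (zpairing th (dvec f))) => h /=; [exact: ltW|].
Qed.

Lemma sgc_sgn (r r' : RR) : sgc (if r == 0 then None else Some (0 < r)) r' ->
  (r = 0 -> r' = 0) /\ (r <= 0 -> r' <= 0).
Proof.
case: eqP => [-> /= ->|/eqP hn] //=.
case: (ltrP 0 r) => h /= h'; split => // hr; try lra.
Qed.

Lemma W_cell th : W th -> cell (sgnv th) `<=` W.
Proof.
move=> [n [hn [E [hq ha [h1 hU]]]]] th' hc.
have nk : (n <= k)%N by case/andP: hn.
exists n; split => //; exists E; split => //; split.
  have := hc (fd (dimvec E 1%:M)); rewrite ffunE -!pairing_fd //.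
  by move=> /sgc_sgn [+ _]; apply.
move=> U hs; have := hU U hs; have := hc (fd (dimvec E U)); rewrite ffunE -!pairing_fd //.
by move=> /sgc_sgn [_ +]; apply.
Qed.

Definition Gs (s : Sig) : seq ivec := sval (cid (HtoV (cellA s))).
Lemma GsE s : icone (Gs s) = cell s.
Proof. by rewrite /Gs; case: cid => G /= ->; exact: cellE. Qed.

Definition good (s : Sig) := cell s `<=` W.

Definition cands : seq (seq ivec) :=
  flatten [seq [seq mask (val t) (Gs s) | t <- enum {: (size (Gs s)).-tuple bool}] | s <- enum Sig].

Definition Pface (t : seq ivec) := exists s, good s /\ is_face (cone t) (cone (Gs s)).

Definition S := [seq t <- cands | `[< Pface t >]].

Lemma filter_cands s (p : pred ivec) : [seq g <- Gs s | p g] \in cands.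
Proof.
rewrite filter_mask; apply/flatten_mapP; exists s; first by rewrite mem_enum.
by apply/mapP; exists (map_tuple p (in_tuple (Gs s))); first by rewrite mem_enum.
Qed.

Lemma is_faceP (tau : set rvec) (G : seq ivec) : is_face tau (cone G) <->
  exists n, (forall g, g \in G -> 0 <= zpair n g) /\
   tau = icone G `&` [set x | zpairing x n = 0].
Proof.
rewrite coneE; split => [[n [h ->]]|[n [h ->]]]; exists n; split => //.
  by move=> g hg; have := h _ (icone_gen hg); rewrite zp_vec ler0z.
exact: icone_ge0.
Qed.

Lemma memS t : t \in S <-> t \in cands /\ Pface t.
Proof.
rewrite mem_filter; split => [/andP [/asboolP ? ?]|[? /asboolP ?]]; first by split.
by apply/andP.
Qed.

Lemma S_face t : t \in S -> exists s, good s /\ exists n,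
  (forall g, g \in Gs s -> 0 <= zpair n g) /\
  icone t = icone (Gs s) `&` [set x | zpairing x n = 0].
Proof.
move=> /memS [_ [s [gs /is_faceP [n [hn e]]]]]; exists s; split => //; exists n.
by rewrite -coneE.
Qed.


Definition epsR (o o' : option bool) : int :=
  if o == o' then 0 else if o is Some b then (if b then 1 else -1) else 0.
Definition nst (s t : Sig) : ivec :=
  [ffun i => \sum_(f : Fk) epsR (s f) (t f) * dvec f i].

Lemma zp_nst x s t : zpairing x (nst s t) =
  \sum_(f : Fk) (epsR (s f) (t f))%:~R * zpairing x (dvec f).
Proof.
rewrite /zpairing.
under eq_bigr do rewrite ffunE rmorph_sum mulr_sumr.
rewrite exchange_big; apply: eq_bigr => f _; rewrite mulr_sumr.
by apply: eq_bigr => i _; rewrite rmorphM /=; ring.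
Qed.

Lemma sgc_eps o o' r : sgc o r -> 0 <= (epsR o o')%:~R * r /\
  ((epsR o o')%:~R * r = 0 <-> sgc o' r).
Proof.
case: o => [[]|]; case: o' => [[]|] /= h; rewrite /epsR /= ?mul0r ?mul1r ?mulN1r.
all: split; [ lra | split => h'; lra ].
Qed.

Lemma nst_ge0 s t x : cell s x -> 0 <= zpairing x (nst s t).
Proof.
move=> hx; rewrite zp_nst; apply: sumr_ge0 => f _.
by have [] := sgc_eps (t f) (hx f).
Qed.

Lemma nst_cell s t x : cell s x -> (zpairing x (nst s t) = 0 <-> cell t x).
Proof.
move=> hx; rewrite zp_nst; split.
  move=> h0 f; have := @psumr_eq0P _ _ predT _ _ h0 f isT.
  have [_ ->] := sgc_eps (t f) (hx f); apply.
  by move=> g _; have [] := sgc_eps (t g) (hx g).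
move=> ht; apply: big1 => f _.
by have [_ ->] := sgc_eps (t f) (hx f); apply: ht.
Qed.

Lemma inter_face t u : t \in S -> u \in S -> is_face (cone t `&` cone u) (cone t).
Proof.
move=> /S_face [s [gs [n1 [hn1 et]]]] /S_face [s' [gs' [n2 [hn2 eu]]]].
have tcell : forall x, icone t x -> cell s x.
  by move=> x; rewrite et GsE => -[].
have h1 : forall g, g \in t -> 0 <= zpair (nst s s') g.
  move=> g hg; have := nst_ge0 s' (tcell _ (icone_gen hg)).
  by rewrite zp_vec ler0z.
have h2 : forall x, icone t x -> zpairing x (nst s s') = 0 -> 0 <= zpairing x n2.
  move=> x hx h0; have := (nst_cell s' (tcell _ hx)).1 h0; rewrite -GsE => hx'.
  exact: icone_ge0 hn2 _ hx'.
have [n' [hn' e']] := face_trans h1 h2.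
apply/is_faceP; exists n'; split => //.
rewrite e' !coneE eu; apply/seteqP; split => x /=.
  move=> [hx [hG hm]]; split => //; split => //.
  by apply/(nst_cell s' (tcell _ hx)); rewrite -GsE.
move=> [[hx h0] hm]; split => //; split => //.
by rewrite GsE; exact: (nst_cell s' (tcell _ hx)).1 h0.
Qed.


Lemma S_cc : cone_complex S.
Proof.
split.
  move=> t ht tau htau.
  have [s [gs [n [hn et]]]] := S_face ht.
  move/is_faceP: htau => [m [hm etau]].
  have h2 : forall x, icone (Gs s) x -> zpairing x n = 0 -> 0 <= zpairing x m.
    move=> x hx h0; have hxt : icone t x by rewrite et.
    exact: icone_ge0 hm _ hxt.
  have [n' [hn' e']] := face_trans hn h2.
  exists [seq g <- Gs s | zpair n' g == 0].
    apply/memS; split; first exact: filter_cands.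
    exists s; split => //; apply/is_faceP; exists n'; split => //.
    by rewrite coneE -icone_face.
  by rewrite coneE -icone_face // e' -et etau.
move=> t u ht hu; split; first exact: inter_face.
by rewrite setIC; exact: inter_face.
Qed.

Lemma S_support : cc_support S = W.
Proof.
apply/seteqP; split => th.
  move=> [t /memS [_ [s [gs /is_faceP [n [_ e]]]]]].
  by rewrite e => -[hx _]; apply: gs; rewrite -GsE.
move=> hW; exists (Gs (sgnv th)).
  apply/memS; split; first by rewrite -(filter_predT (Gs _)); exact: filter_cands.
  exists (sgnv th); split; first exact: W_cell.
  apply/is_faceP; exists 0; split.
    by move=> g _; rewrite /zpair big1 // => i _; rewrite ffunE mul0r.
  rewrite coneE; apply/seteqP; split => x /=; last by case.
  move=> hx; split => //.
  by rewrite /zpairing big1 // => i _; rewrite ffunE mulr0.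
by rewrite coneE GsE; exact: cell_sgnv.
Qed.

Lemma zp_cont (d : ivec) : continuous (fun x : {ptws V -> RR} => zpairing x d).
Proof.
rewrite /zpairing.
apply: continuous_big; first exact: (@add_cont_real RR).
move=> i _.
have -> : (fun x : {ptws V -> RR} => x i * (d i)%:~R) =
  (fun r : RR => r * (d i)%:~R) \o (@proj V (fun=> RR) i) by [].
move=> x; apply: continuous_comp; first exact: proj_continuous.
exact: mulrr_continuous.
Qed.

Lemma cell_closed s : closed (cell s : set {ptws V -> RR}).
Proof.
have -> : (cell s : set {ptws V -> RR}) =
   \bigcap_(f in [set: Fk]) ((fun x : {ptws V -> RR} => zpairing x (dvec f)) @^-1`
      [set r | sgc (s f) r]).
  apply/seteqP; split => x /= h; first by move=> f _; exact: h.
  by move=> f; exact: h.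
apply: closed_bigI => f _.
have := (continuous_closedP _).1 (@zp_cont (dvec f)); apply.
case: (s f) => [[]|] /=; [exact: closed_ge| exact: closed_le| exact: closed_eq].
Qed.

Lemma W_closed : closed (W : set {ptws V -> RR}).
Proof.
have -> : (W : set {ptws V -> RR}) =
   \big[setU/set0]_(s <- enum Sig) (if `[< good s >] then cell s else set0).
  rewrite -bigcup_seq; apply/seteqP; split => th.
    move=> hW; exists (sgnv th); first by rewrite /= mem_enum.
    by rewrite asboolT; [exact: cell_sgnv| exact: W_cell].
  move=> [s _]; case: asboolP => [gs|_] //; exact: gs.
apply: closed_bigsetU => s _; case: asboolP => _; [exact: cell_closed| exact: closed0].
Qed.

End Main.

Theorem mainTheorem5 (V A : finType) (src tgt : A -> V)
    (I : pathalg_elt A -> Prop)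
    (hI : forall r, I r -> len2_comb src tgt r)
    (k : nat) (hk : (1 <= k)%N) :
  (exists S : seq (seq {ffun V -> int}),
      cone_complex S /\ cc_support S = Wset src tgt I k) /\
  closed (Wset src tgt I k : set {ptws V -> RR}).
Proof.
split; last exact: W_closed.
by exists (S src tgt I k); split; [exact: S_cc| exact: S_support].
Qed.
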